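(* Let $d\ge1$ and let $(S_t)_{t\in\mathbb{R}}$ be a one-parameter group of real orthogonal linear operators on $\mathbb{R}^d\otimes\mathbb{R}^d$, with associated maps $\mathcal{S}_t(X)=S_tXS_t^{\top}$ on real $d^2\times d^2$ matrices. Suppose $\mathcal{S}_t(\rho\otimes\rho)=\rho\otimes\rho$ for every $t\in\mathbb{R}$ and every real $d\times d$ density matrix $\rho$ (real symmetric, positive semidefinite, trace one). Then $\mathcal{S}_t$ is the identity map for every $t\in\mathbb{R}$.
   Context: This concerns real quantum theory, in which states of a $d$-level system are real density matrices on $\mathbb{R}^d$ and reversible transformations are conjugations by orthogonal matrices. *)

(* Defs.v *)
From HB Require Import structures.
From mathcomp Require Import all_boot all_order all_algebra.
From mathcomp Require Import mxtens.
From mathcomp Require Import reals.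
Set Implicit Arguments. Unset Strict Implicit. Unset Printing Implicit Defensive.
Import Order.TTheory GRing.Theory Num.Theory.
Local Open Scope ring_scope.

Definition orthogonal_mx (R : realType) (n : nat) (S : 'M[R]_n) : Prop :=
  S *m S^T = 1%:M.

Definition density_mx (R : realType) (d : nat) (rho : 'M[R]_d) : Prop :=
  [/\ rho^T = rho,
      (forall v : 'cV[R]_d, 0 <= (v^T *m rho *m v) 0 0)
    & \tr rho = 1].

Definition orth_one_param_group (R : realType) (n : nat) (S : R -> 'M[R]_n) : Prop :=
  [/\ (forall t, orthogonal_mx (S t)),
      S 0 = 1%:M
    & (forall s t, S (s + t) = S s *m S t)].

Definition conj_map (R : realType) (n : nat) (S : 'M[R]_n) (X : 'M[R]_n) : 'M[R]_n :=
  S *m X *m S^T.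

(* Main.v *)
Require Import Defs.
From HB Require Import structures.
From mathcomp Require Import all_boot all_order all_algebra.
From mathcomp Require Import mxtens.
From mathcomp Require Import reals.
Import Order.TTheory GRing.Theory Num.Theory.
Set Implicit Arguments. Unset Strict Implicit. Unset Printing Implicit Defensive.
Local Open Scope ring_scope.

Section Aux.
Variable R : realType.
Variable d : nat.

Lemma tr_delta (i j : 'I_d) : \tr (delta_mx i j : 'M[R]_d) = (i == j)%:R.
Proof.
rewrite /mxtrace (bigD1 i) //= big1 ?addr0; first by rewrite mxE eqxx /= eq_sym.
by move=> k hk; rewrite mxE (negbTE hk).
Qed.

Lemma dens_gram (Y : 'M[R]_d) (c : R) : 0 < c -> \tr (Y *m Y^T) = c ->
  density_mx (c^-1 *: (Y *m Y^T)).
Proof.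
move=> c0 hc; rewrite /density_mx; split.
- by rewrite linearZ /= trmx_mul trmxK.
- move=> v; rewrite -scalemxAr -scalemxAl mxE.
  apply: mulr_ge0; first by rewrite invr_ge0 ltW.
  have -> : v^T *m (Y *m Y^T) *m v = (Y^T *m v)^T *m (Y^T *m v)
    by rewrite trmx_mul trmxK !mulmxA.
  rewrite mxE; apply: sumr_ge0 => i _; rewrite mxE -expr2; exact: sqr_ge0.
- by rewrite mxtraceZ hc mulVf // gt_eqF.
Qed.

Definition commP (W : 'M[R]_(d * d)) := forall rho : 'M[R]_d, density_mx rho ->
  W *m (rho *t rho) = (rho *t rho) *m W.

Local Notation idx i j := (@mxtens_index d d (i, j)).

Lemma idx_eq (i j k l : 'I_d) : (idx i j == idx k l) = ((i == k) && (j == l)).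
Proof. by rewrite (inj_eq (can_inj (@mxtens_indexK d d))) xpair_eqE. Qed.

Lemma commT W : commP W -> commP W^T.
Proof.
move=> h rho hr.
have hs : (rho *t rho)^T = rho *t rho by rewrite trmx_tens; case: hr => -> _ _.
by rewrite -{1}hs -trmx_mul -(h rho hr) trmx_mul hs.
Qed.

Lemma comm_entry W rho p q : commP W -> density_mx rho ->
  \sum_s W p s * (rho *t rho) s q = \sum_s (rho *t rho) p s * W s q.
Proof. by move=> h hr; have := congr1 (fun M : 'M[R]_(d * d) => M p q) (h rho hr); rewrite !mxE. Qed.

Lemma sum1 n (F : 'I_n -> R) a : (forall s, s != a -> F s = 0) -> \sum_s F s = F a.
Proof. by move=> h; rewrite (bigD1 a) //= big1 ?addr0. Qed.

Lemma sum2 n (F : 'I_n -> R) a b : a != b ->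
  (forall s, s != a -> s != b -> F s = 0) -> \sum_s F s = F a + F b.
Proof.
move=> ab h; rewrite (bigD1 a) //= (bigD1 b) 1?eq_sym //= big1 ?addr0 //.
by move=> s /andP[sa sb]; apply: h.
Qed.

Lemma tens_delta (i j k l : 'I_d) :
  (delta_mx i j : 'M[R]_d) *t delta_mx k l = delta_mx (idx i k) (idx j l).
Proof.
apply/matrixP=> r s; case: (mxtens_indexP r) => i1 j1.
case: (mxtens_indexP s) => i2 j2.
by rewrite tensmxE !mxE !idx_eq -natrM mulnb andbACA.
Qed.

Lemma dens1 k : density_mx (delta_mx k k : 'M[R]_d).
Proof.
have := @dens_gram (delta_mx k k) 1 ltr01.
rewrite trmx_delta mul_delta_mx invr1 scale1r; apply.
by rewrite tr_delta eqxx.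
Qed.

Lemma two_gt0 : (0 : R) < 2. Proof. by rewrite ltr0n. Qed.

Definition r2 (k l : 'I_d) : 'M[R]_d := 2^-1 *: (delta_mx k k + delta_mx l l).
Definition r3 (k l : 'I_d) : 'M[R]_d :=
  2^-1 *: (delta_mx k k + delta_mx k l + delta_mx l k + delta_mx l l).

Lemma dens2 k l : k != l -> density_mx (r2 k l).
Proof.
move=> kl; have lk : l != k by rewrite eq_sym.
have hY : (delta_mx k k + delta_mx l l) *m (delta_mx k k + delta_mx l l)^T
   = delta_mx k k + delta_mx l l :> 'M[R]_d.
  rewrite linearD /= !trmx_delta mulmxDl !mulmxDr !mul_delta_mx.
  by rewrite !mul_delta_mx_0 // addr0 add0r.
have := @dens_gram (delta_mx k k + delta_mx l l) 2 two_gt0.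
rewrite hY; apply.
by rewrite mxtraceD !tr_delta !eqxx.
Qed.

Lemma dens3 k l : k != l -> density_mx (r3 k l).
Proof.
move=> kl; have lk : l != k by rewrite eq_sym.
have hY : (delta_mx k k + delta_mx l k) *m (delta_mx k k + delta_mx l k)^T
   = delta_mx k k + delta_mx k l + delta_mx l k + delta_mx l l :> 'M[R]_d.
  rewrite linearD /= !trmx_delta mulmxDl !mulmxDr !mul_delta_mx.
  by rewrite !addrA.
have := @dens_gram (delta_mx k k + delta_mx l k) 2 two_gt0.
rewrite hY; apply.
rewrite !mxtraceD !tr_delta !eqxx (negbTE kl) (negbTE lk) /=.
by rewrite !addr0.
Qed.

Lemma r2E k l i j : k != l ->
  r2 k l i j = if (i == j) && ((i == k) || (i == l)) then 2^-1 else 0.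
Proof.
move=> kl; have lk : l != k by rewrite eq_sym.
rewrite !mxE.
case: (eqVneq i j) => [eij|ij] /=; first subst j.
  case: (eqVneq i k) => [eik|ik] /=; first by subst i; rewrite (negbTE kl) /= addr0 mulr1.
  case: (eqVneq i l) => [_|il] /=; first by rewrite add0r mulr1.
  by rewrite addr0 mulr0.
have h1 : forall m, ((i == m) && (j == m)) = false.
  by move=> m; apply/andP => -[/eqP a /eqP b]; move: ij; rewrite a b eqxx.
by rewrite !h1 addr0 mulr0.
Qed.


Lemma r3E k l x y : k != l -> (x == k) || (x == l) -> (y == k) || (y == l) ->
  r3 k l x y = 2^-1.
Proof.
move=> kl; have lk : l != k by rewrite eq_sym.
move=> /orP[/eqP->|/eqP->] /orP[/eqP->|/eqP->]; rewrite !mxE !eqxx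
  ?(negbTE kl) ?(negbTE lk) /= ?addr0 ?add0r ?mulr1 //.
Qed.

Lemma col1 W k r : commP W -> r != idx k k -> W r (idx k k) = 0.
Proof.
move=> h hr; have := comm_entry r (idx k k) h (dens1 k).
rewrite tens_delta (@sum1 _ _ (idx k k)); last first.
  by move=> s hs; rewrite mxE (negbTE hs) mulr0.
rewrite big1; last by move=> s _; rewrite mxE (negbTE hr) mul0r.
by rewrite mxE !eqxx mulr1.
Qed.

Lemma row1 W k r : commP W -> r != idx k k -> W (idx k k) r = 0.
Proof. by move=> h hr; have := col1 (commT h) hr; rewrite mxE. Qed.

Lemma col2 W k l r : commP W -> k != l -> r != idx k l -> r != idx l k ->
  W r (idx k l) = 0.
Proof.
move=> h kl ra rb; have lk : l != k by rewrite eq_sym.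
case: (mxtens_indexP r) ra rb => i j ra rb.
case: (eqVneq (idx i j) (idx k k)) => [->|rkk].
  by apply: row1 => //; rewrite idx_eq eqxx /=.
case: (eqVneq (idx i j) (idx l l)) => [->|rll].
  by apply: row1 => //; rewrite idx_eq eqxx andbT /=.
have hnot : ~~ ((i == k) || (i == l)) || ~~ ((j == k) || (j == l)).
  rewrite -negb_and; apply/negP => /andP[/orP[/eqP ei|/eqP ei] /orP[/eqP ej|/eqP ej]];
  subst i j; by move: rkk ra rb rll; rewrite !eqxx.
have := comm_entry (idx i j) (idx k l) h (dens2 kl).
rewrite (@sum1 _ _ (idx k l)); last first.
  move=> s; case: (mxtens_indexP s) => s1 s2; rewrite idx_eq tensmxE !r2E //.
  case: (eqVneq s1 k) => [->|s1k] /=; last by rewrite !mul0r mulr0.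
  case: (eqVneq s2 l) => [->|s2l] //=.
  by rewrite !mulr0.
rewrite big1; last first.
  move=> s _; case: (mxtens_indexP s) => s1 s2; rewrite tensmxE !r2E //.
  by case/orP: hnot => hn; rewrite (negbTE hn) !andbF ?mul0r ?mulr0 ?mul0r.
rewrite tensmxE !r2E // !eqxx /= orbT => /eqP; rewrite mulf_eq0 => /orP[/eqP //|].
by rewrite mulf_eq0 invr_eq0 pnatr_eq0.
Qed.


Lemma r3v k l : k != l -> [/\ r3 k l k k = 2^-1, r3 k l k l = 2^-1,
  r3 k l l k = 2^-1 & r3 k l l l = 2^-1].
Proof. by move=> kl; split; apply: r3E; rewrite ?eqxx ?orbT. Qed.

Lemma row2 W k l r : commP W -> k != l -> r != idx k l -> r != idx l k ->
  W (idx k l) r = 0.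
Proof. by move=> h kl ra rb; have := col2 (commT h) kl ra rb; rewrite mxE. Qed.

Lemma stepT W k l : commP W -> k != l -> W (idx k l) (idx l k) = W (idx l k) (idx k l).
Proof.
move=> h kl; have lk : l != k by rewrite eq_sym.
have hab : idx k l != idx l k by rewrite idx_eq (negbTE kl).
have hba : idx l k != idx k l by rewrite eq_sym.
have hac : idx k l != idx k k by rewrite idx_eq (negbTE lk) andbF.
have hbc : idx l k != idx k k by rewrite idx_eq (negbTE lk).
case: (r3v kl) => e1 e2 e3 e4.
have h1 := comm_entry (idx k l) (idx k k) h (dens3 kl).
rewrite (@sum2 _ _ (idx k l) (idx l k)) // in h1; last first.
  by move=> s sa sb; rewrite row2 // mul0r.
rewrite (@sum1 _ _ (idx k k)) in h1; last first.
  by move=> s sc; rewrite col1 // mulr0.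
have h2 := comm_entry (idx k k) (idx k l) h (dens3 kl).
rewrite (@sum1 _ _ (idx k k)) in h2; last first.
  by move=> s sc; rewrite row1 // mul0r.
rewrite (@sum2 _ _ (idx k l) (idx l k)) // in h2; last first.
  by move=> s sa sb; rewrite col2 // mulr0.
rewrite !tensmxE e1 e2 e3 in h1 h2.
set x := 2^-1 * 2^-1 in h1 h2.
have hx : x != 0 by rewrite mulf_eq0 invr_eq0 pnatr_eq0.
apply: (mulIf hx).
rewrite !(mulrC x) in h1 h2.
by apply: (addrI (W (idx k l) (idx k l) * x)); rewrite h1 h2.
Qed.

Lemma symW W : commP W -> W^T = W.
Proof.
move=> h; apply/matrixP => p q; rewrite mxE.
case: (mxtens_indexP p) => k l; case: (mxtens_indexP q) => m n.
case: (eqVneq (idx m n) (idx k l)) => [->//|hqp].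
case: (eqVneq k l) => [ekl|kl].
  subst l; by rewrite col1 // row1.
case: (eqVneq m n) => [emn|mn].
  subst n; have hpq : idx k l != idx m m by rewrite eq_sym.
  by rewrite row1 // col1.
case: (eqVneq (idx m n) (idx l k)) => [->|h2]; first by rewrite (stepT h kl).
by rewrite col2 // row2.
Qed.

End Aux.

Unset Implicit Arguments. Set Strict Implicit.

Theorem mainTheorem7 (R : realType) (d : nat) (hd : (1 <= d)%N)
  (S : R -> 'M[R]_(d * d)) :
  orth_one_param_group S ->
  (forall (t : R) (rho : 'M[R]_d), density_mx rho ->
     conj_map (S t) (rho *t rho) = rho *t rho) ->
  forall (t : R) (X : 'M[R]_(d * d)), conj_map (S t) X = X.

Proof.
move=> [horth hS0 hSadd] hinv t X.
set U := S (t / 2).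
have hUU : U *m U^T = 1%:M := horth (t / 2).
have hUTU : U^T *m U = 1%:M := mulmx1C hUU.
have hc : commP U.
  move=> rho hr; have e := hinv (t / 2) rho hr; rewrite /conj_map in e.
  by rewrite -{2}e -!mulmxA hUTU mulmx1.
have hsym : U^T = U := symW hc.
have hSt : S t = 1%:M by rewrite {1}(splitr t) hSadd -/U -{2}hsym hUU.
by rewrite /conj_map hSt mul1mx trmx1 mulmx1.
Qed.
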